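(* Let $n>2$ and $q>0$ be integers such that $n$ is even or $q$ is odd, and let $p>\max\{n,(q-1)n+1\}$ be a prime. Then $$ \sum_{k=0}^{p-q}\frac{(q)_k^n}{(1)_k^n}H_{q-1}^{(2)}\equiv\sum_{k=0}^{p-q}\frac{(q)_k^n}{(1)_k^n}H_{q+k-1}^{(2)}\equiv\sum_{k=0}^{p-q}\frac{(q)_k^n}{(1)_k^n}H_k^{(2)}\equiv0\pmod{p}. $$
   Context: $(x)_k$ denotes the Pochhammer symbol: $(x)_0=1$ and $(x)_k=x(x+1)\cdots(x+k-1)$ for $k>0$. $H_k^{(m)}=\sum_{j=1}^k 1/j^m$ is the $k$th harmonic number of order $m$ (with $H_0^{(m)}=0$). A congruence between rational numbers modulo $p^m$ means their difference lies in $p^m\mathbb{Z}_{(p)}$, where $\mathbb{Z}_{(p)}$ is the ring of rationals whose denominators are coprime to $p$. *)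

(* Defs.v *)
From mathcomp Require Import all_boot all_order all_algebra.
Set Implicit Arguments. Unset Strict Implicit. Unset Printing Implicit Defensive.
Import Order.TTheory GRing.Theory Num.Theory.
Local Open Scope ring_scope.

Definition poch (x : rat) (k : nat) : rat := \prod_(i < k) (x + i%:R).

Definition harm (m k : nat) : rat := \sum_(1 <= j < k.+1) (j%:R ^+ m)^-1.

Definition in_pZp (p m : nat) (r : rat) : bool :=
  ~~ (p%:Z %| denq r)%Z && ((p ^ m)%:Z %| numq r)%Z.

Definition cong_rat (p m : nat) (a b : rat) : bool := in_pZp p m (a - b).

(* Main.v *)
Require Import Defs.
From mathcomp Require Import all_boot all_order all_algebra all_field.
From mathcomp Require Import ring lra zify.
Import Order.TTheory GRing.Theory Num.Theory.
Local Open Scope ring_scope.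

Definition pint (p : nat) (r : rat) : bool := ~~ (p%:Z %| denq r)%Z.
Definition red (p : nat) (r : rat) : 'F_p := (numq r)%:~R / (denq r)%:~R.
Definition RR (p : nat) (r : rat) (v : 'F_p) : Prop := pint p r /\ red p r = v.

Set Implicit Arguments. Unset Strict Implicit. Unset Printing Implicit Defensive.

Lemma intF_eq0 p (hp : prime p) (z : int) : ((z%:~R : 'F_p) == 0) = (p%:Z %| z)%Z.
Proof.
rewrite dvdzE /=.
case: z => n.
  by rewrite /= -(dvdn_pcharf (pchar_Fp hp)).
rewrite NegzE mulrNz oppr_eq0 /= -(dvdn_pcharf (pchar_Fp hp)).
by [].
Qed.

Lemma dvdz_primeM p (hp : prime p) (a b : int) :
  (p%:Z %| a * b)%Z = (p%:Z %| a)%Z || (p%:Z %| b)%Z.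
Proof. by rewrite !dvdzE abszM Euclid_dvdM. Qed.

Lemma RR_frac p (hp : prime p) (a b : int) : ~~ (p%:Z %| b)%Z ->
  RR p (a%:~R / b%:~R) (a%:~R / b%:~R).
Proof.
move=> hb.
have b0 : b != 0 by apply: contraNneq hb => ->; rewrite dvdz0.
set x := (a%:~R / b%:~R : rat).
have E : numq x * b = a * denq x.
  apply: (@intr_inj rat).
  rewrite !rmorphM /= numqE /x.
  have : (b%:~R : rat) != 0 by rewrite intr_eq0.
  move=> hb'. field. done.
have dd : (denq x %| b)%Z.
  have : (denq x %| numq x * b)%Z by rewrite E dvdz_mull.
  rewrite Gauss_dvdzr //.
  by rewrite /coprimez gcdzC; have := coprime_num_den x; rewrite /coprime.
have pd : pint p x.
  by rewrite /pint; apply: contra hb => h; apply: dvdz_trans h dd.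
split => //.
rewrite /red.
have bF : (b%:~R : 'F_p) != 0 by rewrite intF_eq0.
have dF : ((denq x)%:~R : 'F_p) != 0 by rewrite intF_eq0.
have EF : ((numq x)%:~R : 'F_p) * b%:~R = a%:~R * (denq x)%:~R.
  by rewrite -!intrM E.
apply/eqP; rewrite eqr_div // EF. by [].
Qed.

Lemma ratE (x : rat) : x = (numq x)%:~R / (denq x)%:~R.
Proof. by rewrite divq_num_den. Qed.

Lemma pintF p (hp : prime p) x : pint p x -> ((denq x)%:~R : 'F_p) != 0.
Proof. by rewrite intF_eq0. Qed.

Lemma RR_add p (hp : prime p) x y u v : RR p x u -> RR p y v -> RR p (x + y) (u + v).
Proof.
move=> [hx <-] [hy <-].
have dx := denq_neq0 x; have dy := denq_neq0 y.
have -> : x + y = ((numq x * denq y + numq y * denq x)%:~R / (denq x * denq y)%:~R : rat).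
  rewrite {1}(ratE x) {1}(ratE y) rmorphD !rmorphM /=.
  have : ((denq x)%:~R : rat) != 0 by rewrite intr_eq0.
  have : ((denq y)%:~R : rat) != 0 by rewrite intr_eq0.
  move=> h1 h2; field; by apply/andP.
have hd : ~~ (p%:Z %| denq x * denq y)%Z by rewrite dvdz_primeM // negb_or; apply/andP.
have [h1 h2] := RR_frac hp (numq x * denq y + numq y * denq x) hd.
split => //; rewrite h2.
have fx := pintF hp hx; have fy := pintF hp hy.
rewrite /red rmorphD !rmorphM /=. field. by apply/andP.
Qed.

Lemma RR_mul p (hp : prime p) x y u v : RR p x u -> RR p y v -> RR p (x * y) (u * v).
Proof.
move=> [hx <-] [hy <-].
have dx := denq_neq0 x; have dy := denq_neq0 y.
have -> : x * y = ((numq x * numq y)%:~R / (denq x * denq y)%:~R : rat).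
  rewrite {1}(ratE x) {1}(ratE y) !rmorphM /=.
  have : ((denq x)%:~R : rat) != 0 by rewrite intr_eq0.
  have : ((denq y)%:~R : rat) != 0 by rewrite intr_eq0.
  move=> h1 h2; field; by apply/andP.
have hd : ~~ (p%:Z %| denq x * denq y)%Z by rewrite dvdz_primeM // negb_or; apply/andP.
have [h1 h2] := RR_frac hp (numq x * numq y) hd.
split => //; rewrite h2.
have fx := pintF hp hx; have fy := pintF hp hy.
rewrite /red !rmorphM /=. field. by apply/andP.
Qed.

Lemma RR_inv p (hp : prime p) x u : RR p x u -> u != 0 -> RR p x^-1 u^-1.
Proof.
move=> [hx <-] hu.
have nF : ((numq x)%:~R : 'F_p) != 0 by apply: contraNneq hu; rewrite /red => ->; rewrite mul0r.
have dx := denq_neq0 x.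
have nx : numq x != 0 by apply: contraNneq nF => ->.
have -> : x^-1 = ((denq x)%:~R / (numq x)%:~R : rat).
  rewrite {1}(ratE x).
  have : ((denq x)%:~R : rat) != 0 by rewrite intr_eq0.
  have : ((numq x)%:~R : rat) != 0 by rewrite intr_eq0.
  move=> h1 h2; field; by apply/andP.
have hd : ~~ (p%:Z %| numq x)%Z by rewrite -intF_eq0.
have [h1 h2] := RR_frac hp (denq x) hd.
split => //; rewrite h2.
have fx := pintF hp hx.
rewrite /red. field. by apply/andP.
Qed.

Lemma RR_int p (hp : prime p) (z : int) : RR p z%:~R z%:~R.
Proof.
have := RR_frac hp z (b := 1).
rewrite !divr1; apply.
by rewrite dvdzE /= dvdn1; case: p hp => [|[|]].
Qed.

Lemma RR_nat p (hp : prime p) (n : nat) : RR p n%:R n%:R.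
Proof. exact: (RR_int hp n). Qed.

Lemma RR_exp p (hp : prime p) x u k : RR p x u -> RR p (x ^+ k) (u ^+ k).
Proof.
move=> h; elim: k => [|k ih]; first by rewrite !expr0; apply: (RR_nat hp 1).
by rewrite !exprS; apply: RR_mul.
Qed.

Lemma RR_sum p (hp : prime p) I (r : seq I) (P : pred I) (F : I -> rat) (G : I -> 'F_p) :
  (forall i, P i -> RR p (F i) (G i)) ->
  RR p (\sum_(i <- r | P i) F i) (\sum_(i <- r | P i) G i).
Proof.
move=> h; apply: (big_ind2 (RR p)) => //; first exact: (RR_nat hp 0).
by move=> *; apply: RR_add.
Qed.

Lemma RR_prod p (hp : prime p) I (r : seq I) (P : pred I) (F : I -> rat) (G : I -> 'F_p) :
  (forall i, P i -> RR p (F i) (G i)) ->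
  RR p (\prod_(i <- r | P i) F i) (\prod_(i <- r | P i) G i).
Proof.
move=> h; apply: (big_ind2 (RR p)) => //; first exact: (RR_nat hp 1).
by move=> *; apply: RR_mul.
Qed.

Lemma RR_cong p (hp : prime p) x : RR p x 0 -> cong_rat p 1 x 0.
Proof.
move=> [hx hr]; rewrite /cong_rat /in_pZp subr0; apply/andP; split; first exact: hx.
rewrite expn1.
rewrite -intF_eq0 //.
move: hr; rewrite /red => /eqP; rewrite mulf_eq0 invr_eq0 (negbTE (pintF hp hx)) orbF.
done.
Qed.

Lemma natF_eq0 p (hp : prime p) (n : nat) : ((n%:R : 'F_p) == 0) = (p %| n)%N.
Proof. by rewrite -(dvdn_pcharf (pchar_Fp hp)). Qed.

Lemma natF_neq0 p (hp : prime p) (n : nat) : (0 < n < p)%N -> ((n%:R : 'F_p) != 0).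
Proof.
move=> /andP[h1 h2]; rewrite natF_eq0 //; apply/negP => /(dvdn_leq h1); rewrite leqNgt h2.
done.
Qed.

Lemma PW p (hp : prime p) i : (i < p.-1)%N -> \sum_(0 <= k < p) (k%:R : 'F_p) ^+ i = 0.
Proof.
elim/ltn_ind: i => i IH hi.
set S := fun j => \sum_(0 <= k < p) (k%:R : 'F_p) ^+ j.
have T : \sum_(0 <= k < p) (((k.+1)%:R : 'F_p) ^+ i.+1 - (k%:R) ^+ i.+1) = 0.
  rewrite (telescope_sumr (fun k => (k%:R : 'F_p) ^+ i.+1)) //.
  by rewrite pchar_Fp_0 // expr0n subr0.
have T2 : \sum_(0 <= k < p) \sum_(j < i.+1) ((k%:R : 'F_p) ^+ j *+ 'C(i.+1, j)) = 0.
  apply: etrans T; apply: eq_bigr => k _.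
  by rewrite mulrSr exprD1n [in RHS]big_ord_recr /= binn mulr1n addrK.
rewrite exchange_big /= big_ord_recr /= in T2.
rewrite big1 ?add0r in T2; last first.
  move=> j _; rewrite sumrMnl IH ?mul0rn //.
  by apply: ltn_trans hi.
rewrite sumrMnl binSn -mulr_natr in T2.
move/eqP: T2; rewrite mulf_eq0 => /orP[/eqP //|].
rewrite natF_eq0 // => /(dvdn_leq (ltn0Sn _)).
move=> h; move: hi h; clear; case: p => // p0 /=; lia.
Qed.

Lemma PS p (hp : prime p) (g : {poly 'F_p}) : (size g < p)%N ->
  \sum_(0 <= k < p) g.[k%:R] = 0.
Proof.
move=> hs.
under eq_bigr do rewrite horner_coef.
rewrite exchange_big /= big1 // => i _.
rewrite -mulr_sumr PW ?mulr0 //.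
have := ltn_ord i; move: hs; move: (size g) (nat_of_ord i); clear; case: p => // p0 /=; lia.
Qed.

Lemma EXT p (hp : prime p) (g : {poly 'F_p}) N : (N < p)%N -> (size g < p)%N ->
  (forall k, (N < k < p)%N -> g.[k%:R] = 0) ->
  \sum_(0 <= k < N.+1) g.[k%:R] = 0.
Proof.
move=> hN hs hz.
have := PS hp hs; rewrite (@big_cat_nat _ _ _ N.+1) //=.
rewrite [X in _ + X = _ -> _]big1_seq ?addr0 //.
move=> k; rewrite mem_index_iota => /andP[h1 h2]; apply: hz.
by [].
Qed.

Lemma I1 q k : (0 < q)%N -> (\prod_(i < k) (q + i) * (q - 1)`! = (q - 1 + k)`!)%N.
Proof.
move=> hq; elim: k => [|k ih]; first by rewrite big_ord0 mul1n addn0.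
rewrite big_ord_recr /= mulnAC ih addnS factS.
have -> : (q - 1 + k).+1 = q + k by lia.
by rewrite mulnC.
Qed.

Lemma I2 r k : (k`! * \prod_(1 <= j < r.+1) (k + j) = (k + r)`!)%N.
Proof.
elim: r => [|r ih]; first by rewrite big_geq // muln1 addn0.
by rewrite big_nat_recr //= mulnA ih addnS factS mulnC.
Qed.

Lemma I3 k : (\prod_(i < k) (1 + i) = k`!)%N.
Proof. by have := I1 k (ltn0Sn 0); rewrite muln1 add0n. Qed.

Definition Qv p q (x : 'F_p) := \prod_(1 <= j < q) (x + j%:R).
Definition QP p (s : seq nat) : {poly 'F_p} := \prod_(i <- s) ('X - (- i%:R)%:P).

Lemma hornerQP p s (x : 'F_p) : (QP p s).[x] = \prod_(i <- s) (x + i%:R).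
Proof. by rewrite /QP horner_prod; apply: eq_bigr => i _; rewrite hornerXsubC opprK. Qed.

Lemma sizeQP p s : size (QP p s) = (size s).+1.
Proof. by rewrite /QP size_prod_XsubC. Qed.

Lemma natF_neq0' p (hp : prime p) (n : nat) : (0 < n < p)%N -> ((n%:R : 'F_p) != 0).
Proof.
move=> /andP[h1 h2]; rewrite -(dvdn_pcharf (pchar_Fp hp)); apply/negP => /(dvdn_leq h1); rewrite leqNgt h2.
done.
Qed.

Lemma factF_neq0 p (hp : prime p) k : (k < p)%N -> ((k`!)%:R : 'F_p) != 0.
Proof.
move=> hk; rewrite fact_prod natr_prod prodf_seq_neq0; apply/allP => j.
rewrite mem_index_iota => /andP[h1 h2] /=; apply: natF_neq0' => //.
by rewrite h1 /=; apply: leq_ltn_trans hk.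
Qed.

Lemma term_val p (hp : prime p) q k n : (0 < q)%N -> (q + k <= p)%N ->
  (\prod_(i < k) ((q%:R : 'F_p) + i%:R)) ^+ n / (\prod_(i < k) (1 + i%:R)) ^+ n
  = (Qv q (k%:R : 'F_p) / ((q - 1)`!)%:R) ^+ n.
Proof.
move=> hq hk.
rewrite -expr_div_n; congr (_ ^+ n).
have B : \prod_(i < k) (1 + i%:R) = ((k`!)%:R : 'F_p).
  by rewrite -I3 natr_prod; apply: eq_bigr => i _; rewrite natrD.
have A : \prod_(i < k) ((q%:R : 'F_p) + i%:R) = (\prod_(i < k) (q + i))%:R.
  by rewrite natr_prod; apply: eq_bigr => i _; rewrite natrD.
have Q : Qv q (k%:R : 'F_p) = (\prod_(1 <= j < q) (k + j))%:R.
  by rewrite /Qv natr_prod; apply: eq_bigr => i _; rewrite natrD.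
have hk1 : (k < p)%N by lia.
have hq1 : (q - 1 < p)%N by lia.
rewrite B A Q; apply/eqP; rewrite eqr_div ?factF_neq0 //.
rewrite -!natrM I1 //; apply/eqP; congr (_%:R).
have := I2 (q - 1) k; rewrite (_ : (q - 1).+1 = q); last by lia.
by rewrite mulnC => ->; congr (_`!); lia.
Qed.

Definition Hf p m : 'F_p := \sum_(1 <= j < m.+1) ((j%:R : 'F_p) ^+ 2)^-1.

Lemma HfS p m : Hf p m.+1 = Hf p m + (((m.+1)%:R : 'F_p) ^+ 2)^-1.
Proof. by rewrite /Hf big_nat_recr. Qed.

Lemma Hf0 p : Hf p 0 = 0.
Proof. by rewrite /Hf big_geq. Qed.

Lemma Fermat p (hp : prime p) (x : 'F_p) : x ^+ p = x.
Proof. by have := expf_card x; rewrite card_Fp. Qed.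

Lemma Hfp p (hp : prime p) : (4 < p)%N -> Hf p p.-1 = 0.
Proof.
move=> h4.
have E : forall j, (0 < j < p)%N -> (((j%:R : 'F_p) ^+ 2)^-1 = (j%:R) ^+ (p - 3)).
  move=> j hj; have x0 := natF_neq0' hp hj.
  set x := (j%:R : 'F_p) in x0 *.
  have x2 : x ^+ 2 != 0 by rewrite expf_neq0.
  have e : x ^+ 2 * x ^+ (p - 3) = 1.
    apply: (mulfI x0); rewrite mulr1 mulrA -exprS -exprD.
    by rewrite (_ : (3 + (p - 3))%N = p) ?Fermat //; lia.
  by rewrite -[RHS](mulKf x2) e mulr1.
rewrite /Hf prednK ?prime_gt0 //.
rewrite (eq_big_nat _ _ (F2 := fun j => (j%:R : 'F_p) ^+ (p - 3))); last first.
  by move=> j /andP[h1 h2]; apply: E; rewrite h1.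
have h : \sum_(0 <= k < p) (k%:R : 'F_p) ^+ (p - 3) = 0 by apply: PW; lia.
rewrite big_ltn ?prime_gt0 // mulr0n expr0n /= in h.
have e : (p - 3 == 0)%N = false by apply/negbTE; lia.
by rewrite e add0r in h.
Qed.

Lemma Hf_rev p (hp : prime p) k : (4 < p)%N -> (k < p)%N -> Hf p (p.-1 - k) = - Hf p k.
Proof.
move=> h4; elim: k => [|k ih] hk; first by rewrite subn0 Hfp // Hf0 oppr0.
have e : (p.-1 - k = (p.-1 - k.+1).+1)%N by lia.
have := ih (ltnW hk); rewrite e HfS => ih'.
have ha : ((p.-1 - k.+1).+1%:R : 'F_p) = - (k.+1)%:R.
  apply/eqP; rewrite -addr_eq0 -natrD.
  rewrite (_ : ((p.-1 - k.+1).+1 + k.+1 = p)%N) ?pchar_Fp_0 //; lia.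
rewrite ha sqrrN in ih'.
rewrite HfS opprD -ih'; ring.
Qed.

Lemma Hf_diff p k r : Hf p (k + r) - Hf p k = \sum_(1 <= j < r.+1) ((((k + j)%:R) : 'F_p) ^+ 2)^-1.
Proof.
elim: r => [|r ih]; first by rewrite addn0 subrr big_geq.
by rewrite addnS HfS big_nat_recr //= -ih addnS addrAC.
Qed.

Lemma Qv_rev p (hp : prime p) q k : (0 < q)%N -> (q <= p)%N -> (k <= p - q)%N ->
  Qv q ((p - q - k)%:R : 'F_p) = (-1) ^+ (q - 1) * Qv q (k%:R).
Proof.
move=> hq hqp hk.
have e : ((p - q - k)%:R : 'F_p) = - (q + k)%:R.
  apply/eqP; rewrite -addr_eq0 -natrD.
  by rewrite (_ : (p - q - k + (q + k) = p)%N) ?pchar_Fp_0 //; lia.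
rewrite /Qv e.
transitivity (\prod_(1 <= j < q) (-1 * ((k + (q - j))%:R : 'F_p))).
  apply: eq_big_nat => j /andP[h1 h2].
  rewrite [(k + (q - j))%:R]natrD [(q - j)%:R]natrB ?(ltnW h2) // [(q + k)%:R]natrD; ring.
rewrite big_split /= prodr_const_nat; congr (_ * _).
rewrite [RHS]big_nat_rev; apply: eq_big_nat => j /andP[h1 h2].
rewrite natrD; congr (_ + _%:R); lia.
Qed.

Definition cF p q n k : 'F_p := (Qv q (k%:R : 'F_p) / ((q - 1)`!)%:R) ^+ n.

Lemma cF_rev p (hp : prime p) q n k : (0 < q)%N -> (q <= p)%N -> (k <= p - q)%N ->
  ~~ odd ((q - 1) * n) -> cF p q n (p - q - k) = cF p q n k.
Proof.
move=> hq hqp hk hodd.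
rewrite /cF Qv_rev // -mulrA exprMn -exprM -signr_odd (negbTE hodd) expr0 mul1r.
done.
Qed.

Lemma Qv_zero p (hp : prime p) q k : (p - q < k < p)%N -> Qv q (k%:R : 'F_p) = 0.
Proof.
move=> /andP[h1 h2]; apply/eqP; rewrite prodf_seq_eq0; apply/hasP; exists (p - k)%N.
  rewrite mem_index_iota; apply/andP; split; lia.
rewrite /= -natrD (_ : (k + (p - k) = p)%N) ?pchar_Fp_0 //; lia.
Qed.

Lemma S0 p (hp : prime p) q n : (0 < q)%N -> (0 < n)%N -> ((q - 1) * n + 1 < p)%N ->
  \sum_(0 <= k < (p - q).+1) cF p q n k = 0.
Proof.
move=> hq hn hb.
have p0 := prime_gt0 hp.
pose g := ((((q - 1)`!)%:R : 'F_p)^-1) ^+ n *: (QP p (index_iota 1 q)) ^+ n.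
have Eg : forall k, g.[k%:R] = cF p q n k.
  move=> k; rewrite /g hornerZ horner_exp hornerQP /cF /Qv.
  by rewrite -exprMn mulrC.
rewrite (eq_bigr (fun k => g.[k%:R])); last by move=> k _; rewrite Eg.
apply: EXT => //.
- lia.
- apply: leq_ltn_trans (size_scale_leq _ _) _.
  apply: leq_ltn_trans (size_exp_leq _ _) _.
  rewrite sizeQP size_iota /=; lia.
- by move=> k hk; rewrite Eg /cF Qv_zero // mul0r expr0n; by case: n {g Eg} hb hn.
Qed.

Lemma Qv_split p q j (x : 'F_p) : (1 <= j < q)%N ->
  Qv q x = (QP p (index_iota 1 j ++ index_iota j.+1 q)).[x] * (x + j%:R).
Proof.
move=> /andP[h1 h2].
rewrite hornerQP big_cat /Qv [LHS](big_cat_nat _ (n := j)) //=; last by apply: ltnW.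
rewrite [X in _ * X = _](big_ltn h2) /=; ring.
Qed.

Lemma Tj p (hp : prime p) q n j : (1 <= j < q)%N -> (2 < n)%N -> ((q - 1) * n + 1 < p)%N ->
  \sum_(0 <= k < (p - q).+1) cF p q n k * ((((k + j)%:R) : 'F_p) ^+ 2)^-1 = 0.
Proof.
move=> hj hn hb.
have p0 := prime_gt0 hp.
case: n hn hb => [|[|[|m]]] // _ hb.
set s := (index_iota 1 j ++ index_iota j.+1 q).
set C := (((q - 1)`!)%:R : 'F_p).
have hq : (q < p)%N by move: hj hb; clear; nia.
have C0 : C != 0 by apply: factF_neq0; lia.
pose g := (C^-1) ^+ m.+3 *: ((QP p s) ^+ m.+3 * ('X - (- j%:R)%:P) ^+ m.+1).
have Eg : forall k, (k <= p - q)%N -> g.[k%:R] = cF p q m.+3 k * ((((k + j)%:R) : 'F_p) ^+ 2)^-1.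
  move=> k hk.
  have y0 : (((k + j)%:R) : 'F_p) != 0 by apply: (natF_neq0' hp); move: hj hk hq; clear; lia.
  rewrite /g hornerZ hornerM !horner_exp hornerXsubC opprK /cF (Qv_split _ hj) -natrD.
  move: y0; set y := (((k + j)%:R) : 'F_p); set z := (QP p s).[k%:R] => y0.
  rewrite !expr_div_n !exprMn !exprS -/C exprVn expr0 mulr1.
  have Cm : C ^+ m != 0 by rewrite expf_neq0.
  field. by rewrite -natrD y0 Cm C0.
rewrite (eq_big_nat _ _ (F2 := fun k => g.[k%:R])); last first.
  by move=> k /andP[_ hk]; rewrite Eg //; move: hk; clear; lia.
apply: EXT => //.
- lia.
- apply: leq_ltn_trans (size_scale_leq _ _) _.
  apply: leq_ltn_trans (size_mul_leq _ _) _.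
  rewrite size_exp_XsubC.
  have ss : size s = (q - 2)%N by rewrite /s size_cat !size_iota; move: hj; clear; lia.
  have := size_exp_leq (QP p s) m.+3; rewrite sizeQP ss /=.
  move: hj hb; clear; nia.
- move=> k hk; rewrite /g hornerZ hornerM !horner_exp hornerXsubC opprK hornerQP.
  have [e|ne] := eqVneq (p - k)%N j.
    rewrite -natrD (_ : (k + j = p)%N) ?pchar_Fp_0 ?expr0n ?mulr0 //; move: e hk; clear; lia.
  suff -> : \prod_(i <- s) ((k%:R : 'F_p) + i%:R) = 0 by rewrite expr0n mul0r mulr0.
  apply/eqP; rewrite prodf_seq_eq0; apply/hasP; exists (p - k)%N.
    rewrite /s mem_cat !mem_index_iota; move: ne hk hj; clear; lia.
  rewrite /= -natrD (_ : (k + (p - k) = p)%N) ?pchar_Fp_0 //; move: hk; clear; lia.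
Qed.

Lemma RR_sum_seq p (hp : prime p) (r : seq nat) (F : nat -> rat) (G : nat -> 'F_p) :
  (forall i, i \in r -> RR p (F i) (G i)) ->
  RR p (\sum_(i <- r) F i) (\sum_(i <- r) G i).
Proof.
elim: r => [|a r ih] h; first by rewrite !big_nil; apply: (RR_nat hp 0).
rewrite !big_cons; apply: (RR_add hp) => //; first by apply: h; rewrite mem_head.
by apply: ih => i hi; apply: h; rewrite in_cons hi orbT.
Qed.

Lemma T23 p (hp : prime p) q n : (0 < q)%N -> (2 < n)%N -> ((q - 1) * n + 1 < p)%N ->
  \sum_(0 <= k < (p - q).+1) cF p q n k * Hf p (q + k - 1)
  - \sum_(0 <= k < (p - q).+1) cF p q n k * Hf p k = 0.
Proof.
move=> hq hn hb.
rewrite -sumrB.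
rewrite (eq_bigr (fun k => \sum_(1 <= j < q) cF p q n k * ((((k + j)%:R) : 'F_p) ^+ 2)^-1)); last first.
  move=> k _; rewrite -mulrBr (_ : (q + k - 1 = k + (q - 1))%N); last by lia.
  by rewrite Hf_diff (_ : (q - 1).+1 = q) ?mulr_sumr //; lia.
rewrite exchange_big /= big1_seq // => j /andP[_]; rewrite mem_index_iota => hj.
exact: Tj.
Qed.

Lemma T2rev p (hp : prime p) q n : (0 < q)%N -> (q <= p)%N -> (4 < p)%N ->
  ~~ odd ((q - 1) * n) ->
  \sum_(0 <= k < (p - q).+1) cF p q n k * Hf p (q + k - 1)
  = - \sum_(0 <= k < (p - q).+1) cF p q n k * Hf p k.
Proof.
move=> hq hqp h4 hodd.
rewrite big_nat_rev /= -sumrN; apply: eq_big_nat => k /andP[_ hk].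
rewrite add0n subSS cF_rev //.
rewrite (_ : (q + (p - q - k) - 1 = p.-1 - k)%N); last by lia.
by rewrite Hf_rev ?mulrN //; lia.
Qed.

Lemma RR_poch p (hp : prime p) (a : nat) k :
  RR p (poch a%:R k) (\prod_(i < k) ((a%:R : 'F_p) + i%:R)).
Proof.
by apply: (RR_prod hp) => // i _; apply: (RR_add hp) => //; apply: RR_nat.
Qed.

Lemma Bnz p (hp : prime p) k : (k < p)%N -> (\prod_(i < k) (1 + (i%:R : 'F_p))) != 0.
Proof.
move=> hk.
have -> : \prod_(i < k) (1 + (i%:R : 'F_p)) = ((k`!)%:R : 'F_p).
  by rewrite -I3 natr_prod; apply: eq_bigr => i _; rewrite natrD.
exact: factF_neq0.
Qed.

Lemma RR_term p (hp : prime p) q n k : (0 < q)%N -> (q + k <= p)%N ->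
  RR p (poch q%:R k ^+ n / poch 1 k ^+ n) (cF p q n k).
Proof.
move=> hq hk.
rewrite /cF -term_val //.
apply: (RR_mul hp); first by apply: (RR_exp hp); apply: RR_poch.
apply: (RR_inv hp); last by rewrite expf_neq0 // Bnz //; lia.
apply: (RR_exp hp); exact: (RR_poch hp 1 k).
Qed.

Lemma RR_harm p (hp : prime p) m : (m < p)%N -> RR p (harm 2 m) (Hf p m).
Proof.
move=> hm; apply: (RR_sum_seq hp) => // j; rewrite mem_index_iota => hj.
apply: (RR_inv hp); first by apply: (RR_exp hp); apply: RR_nat.
by rewrite expf_neq0 // natF_neq0' //; move: hj hm; clear; lia.
Qed.

Unset Implicit Arguments.

Theorem lemma2p2 (n q p : nat) :
  (2 < n)%N -> (0 < q)%N -> (~~ odd n || odd q) -> prime p ->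
  (maxn n ((q - 1) * n + 1) < p)%N ->
  [/\ cong_rat p 1
        (\sum_(0 <= k < (p - q).+1)
           (poch q%:R k ^+ n / poch 1 k ^+ n) * harm 2 (q - 1)) 0,
      cong_rat p 1
        (\sum_(0 <= k < (p - q).+1)
           (poch q%:R k ^+ n / poch 1 k ^+ n) * harm 2 (q + k - 1)) 0
    & cong_rat p 1
        (\sum_(0 <= k < (p - q).+1)
           (poch q%:R k ^+ n / poch 1 k ^+ n) * harm 2 k) 0].
Proof.
move=> hn hq hpar hp hmax.
have hnp : (n < p)%N by lia.
have hb : ((q - 1) * n + 1 < p)%N by lia.
have hqp : (q <= p)%N by move: hb hn; clear; nia.
have h4 : (4 < p)%N.
  case: (p =P 4) => [e|ne]; first by rewrite e in hp.
  by move: ne hnp hn; clear; lia.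
have hodd : ~~ odd ((q - 1) * n).
  rewrite oddM oddB // /=; move: hpar; by case: (odd n); case: (odd q).
have RT : forall k, k \in index_iota 0 (p - q).+1 ->
    RR p (poch q%:R k ^+ n / poch 1 k ^+ n) (cF p q n k).
  move=> k; rewrite mem_index_iota => hk; apply: RR_term => //; lia.
have E23 := T23 hp hq hn hb.
have E2 := T2rev hp hq hqp h4 hodd.
have T3 : \sum_(0 <= k < (p - q).+1) cF p q n k * Hf p k = 0.
  move: E23; rewrite E2 -opprD -mulr2n => /eqP; rewrite oppr_eq0 -mulr_natr mulf_eq0.
  case/orP => /eqP // e; exfalso; move: e; apply/eqP; apply: natF_neq0' => //.
  by move: h4; clear; lia.
split; apply: (RR_cong hp).
- have -> : 0 = \sum_(0 <= k < (p - q).+1) cF p q n k * Hf p (q - 1).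
    by rewrite -mulr_suml S0 ?mul0r //; lia.
  apply: (RR_sum_seq hp) => // k hk; apply: (RR_mul hp); first exact: RT.
  apply: RR_harm => //; lia.
- rewrite (_ : (0 : 'F_p) = \sum_(0 <= k < (p - q).+1) cF p q n k * Hf p (q + k - 1)); last by rewrite E2 T3 oppr0.
  apply: (RR_sum_seq hp) => // k hk; apply: (RR_mul hp); first exact: RT.
  apply: RR_harm => //; move: hk; rewrite mem_index_iota; lia.
- rewrite -T3.
  apply: (RR_sum_seq hp) => // k hk; apply: (RR_mul hp); first exact: RT.
  apply: RR_harm => //; move: hk; rewrite mem_index_iota; lia.
Qed.
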